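(* Let $X_i$ be a nonnegative random variable with survival function $\overline{F}_i(x) = \mathbb{P}(X_i > x)$, and for $\theta \in (0,1)$ define $$t_i(\theta) := \sup\{ t \geq 0 : \theta \, \overline{F}_i(x) \leq \overline{F}_i(x/\theta) \text{ for all } x \in [0,t) \}.$$ Then $t_i(\theta) > 0$ for every $\theta \in (0,1)$. *)

(* Defs.v *)
From HB Require Import structures.
From mathcomp Require Import all_boot all_order all_algebra.
From mathcomp Require Import all_classical all_reals all_analysis.
Set Implicit Arguments. Unset Strict Implicit. Unset Printing Implicit Defensive.
Import Order.TTheory GRing.Theory Num.Theory.
Local Open Scope classical_set_scope.
Local Open Scope ring_scope.
Local Open Scope ereal_scope.

Definition survival (d : measure_display) (T : measurableType d) (R : realType)
  (P : probability T R) (X : {RV P >-> R}) (x : R) : \bar R :=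
  P [set w | x < X w]%R.

Definition tcrit (d : measure_display) (T : measurableType d) (R : realType)
  (P : probability T R) (X : {RV P >-> R}) (theta : R) : \bar R :=
  ereal_sup [set t%:E | t in [set t : R | (0 <= t)%R /\
     (forall x : R, (0 <= x)%R -> (x < t)%R ->
        theta%:E * survival X x <= survival X (x / theta))]].

(* Main.v *)
Require Import Defs.
From HB Require Import structures.
From mathcomp Require Import all_boot all_order all_algebra.
From mathcomp Require Import all_classical all_reals all_analysis.
Import Order.TTheory GRing.Theory Num.Theory.
Local Open Scope ring_scope.
Local Open Scope ereal_scope.

Lemma mgt (d : measure_display) (T : measurableType d) (R : realType)
  (P : probability T R) (X : {RV P >-> R}) (a : R) :
  measurable [set w | (a < X w)%R]%classic.
Proof.
have -> : [set w | (a < X w)%R]%classic = (X @^-1` `]a, +oo[)%classic.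
  by apply/seteqP; split=> w /=; rewrite in_itv /= andbT.
exact: measurable_funPTI.
Qed.
Arguments mgt {d T R P} X a.

Theorem lemma12 (d : measure_display) (T : measurableType d) (R : realType)
  (P : probability T R) (X : {RV P >-> R})
  (Xnonneg : forall w, (0 <= X w)%R)
  (theta : R) (htheta : (0 < theta < 1)%R) :
  0 < tcrit X theta.
Proof.
case/andP: htheta => th0 th1.
pose F := fun n : nat => [set w | ((n.+1%:R)^-1 < X w)%R]%classic.
pose p := P [set w | (0 < X w)%R]%classic.
have ndF : {homo (fun n => P (F n)) : n m / (n <= m)%N >-> n <= m}.
  move=> n m nm; apply: le_measure; rewrite ?inE; try exact: mgt.
  move=> w /=; apply: le_lt_trans; rewrite lef_pV2 ?posrE // ler_nat ltnS //.
have UF : (\bigcup_n F n)%classic = [set w | (0 < X w)%R]%classic.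
  apply/seteqP; split=> w /=.
    by move=> [n _ /=]; apply: lt_trans; rewrite invr_gt0.
  move=> Xw; have [N _ HN] := near_infty_natSinv_lt (PosNum Xw).
  by exists N => //; apply: (HN N) => /=.
have key : exists n, theta%:E * p <= P (F n).
  have p0 : 0 <= p by apply: measure_ge0.
  have pfin : p \is a fin_num.
    rewrite ge0_fin_numE //; rewrite /p; exact: (le_lt_trans (probability_le1 P (mgt X 0%R)) (ltry _)).
  have [pz|pnz] := eqVneq p 0.
    by exists 0%N; rewrite pz mule0.
  have ppos : 0 < p by rewrite lt0e pnz.
  have cv1 : ((fun n => P (F n)) @ \oo --> p)%classic.
    rewrite /p -UF; apply: nondecreasing_cvg_mu => //.
    - by move=> n; exact: mgt.
    - by rewrite UF; exact: mgt.
    - by move=> n m nm; apply/subsetPset => w /=; apply: le_lt_trans; rewrite lef_pV2 ?posrE // ler_nat ltnS.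
  have cv2 := ereal_nondecreasing_cvgn ndF.
  have e : p = ereal_sup (range (fun n => P (F n))).
    by rewrite -(cvg_lim _ cv1) // -(cvg_lim _ cv2).
  have : theta%:E * p < ereal_sup (range (fun n => P (F n))).
    rewrite -e -(fineK pfin) -EFinM lte_fin gtr_pMl //.
    by rewrite -lte_fin (fineK pfin).
  move=> /ereal_sup_gt [y [n _ <-] /ltW]; by exists n.
case: key => n Hn.
have tpos : (0 < theta / n.+1%:R)%R by rewrite divr_gt0.
apply: (lt_le_trans (_ : 0 < (theta / n.+1%:R)%:E)); first by rewrite lte_fin.
apply: ereal_sup_ubound; exists (theta / n.+1%:R)%R => //; split; first exact: ltW.
move=> x x0 xt.
apply: (le_trans _ (le_trans Hn _)).
  apply: lee_pmul => //; first by rewrite lee_fin ltW.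
  rewrite /survival; apply: le_measure; rewrite ?inE; try exact: mgt.
  by move=> w /=; apply: le_lt_trans.
rewrite /survival; apply: le_measure; rewrite ?inE; try exact: mgt.
move=> w /=; apply: le_lt_trans.
by rewrite ler_pdivrMr // mulrC ltW.
Qed.
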